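(* Fix $0<p<1$ and $\lambda>0$, and for each $n$ let $\Delta=\Delta(n)=\frac{-\ln\left(1-\sqrt[n]{p}\right)}{\lambda}$. Then the expected response time of the protocol $\mathrm{PA\text{-}CORE}(\Delta)$ satisfies $\mathbb{E}[RT]\in O\!\left(\frac{\sqrt n\,\log n}{\lambda}\right)$ as $n\to\infty$; in particular it is sub-linear in $n$.
   Context: Setting: a supervisor $i_0$ and $n+1$ worker agents $i_1,\ldots,i_{n+1}$, connected by a complete reliable network; each message's delay is an independent exponential random variable with parameter $\lambda$. There is no global clock: each agent $i_k$ has a local clock $C_{i_k}(t)$ that measures elapsed time accurately but may be offset by an unknown constant; $C_{i_0}(t)=t$, and $i_0$ receives an external input at time $t=0$. Let $\delta=\frac{\ln n}{\lambda\sqrt n}$. Protocol $\mathrm{PA\text{-}CORE}(\Delta)$: at time $0$, $i_0$ sends ''trigger'' to all workers. Upon receiving ''trigger'', a worker sends ''redirect'' to each of the other $n$ workers. Each worker $i_k$ records its local clock readings $\tau_1,\ldots,\tau_n$ at the arrivals of the $n$ ''redirect'' messages it receives; upon the $n$-th one it computes $T=\frac1n\sum_{m=1}^n\tau_m-\frac{2}{\lambda}$, defines the adjusted clock $C^{Adj}_{i_k}(t)=C_{i_k}(t)-T$, waits until $C^{Adj}_{i_k}(t)\ge \Delta+2\delta(k-1)$ (not waiting if this already holds), and performs its action $\alpha_k$. With $t_k$ the (real) time at which $i_k$ performs $\alpha_k$, the response time is $RT=\max_k t_k$. *)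

(* Defs.v *)
From HB Require Import structures.
From mathcomp Require Import all_boot all_order all_algebra.
From mathcomp Require Import all_classical all_reals all_analysis.
Set Implicit Arguments. Unset Strict Implicit. Unset Printing Implicit Defensive.
Import Order.TTheory GRing.Theory Num.Theory.
Local Open Scope classical_set_scope.
Local Open Scope ring_scope.

Section PACore.
Variable R : realType.

Definition exp_pdf (lam x : R) : R := if 0 <= x then lam * expR (- (lam * x)) else 0.

(* Expectation of F(X_0,...,X_{m-1}) where X_0,...,X_{m-1} are i.i.d.
   Exp(lam), written as the iterated integral against the product density
   (F nonnegative; the value of F at indices >= m is irrelevant). *)
Fixpoint iid_exp_expect (lam : R) (m : nat) (F : (nat -> R) -> \bar R) : \bar R :=
  match m with
  | 0%N => F (fun _ => 0)
  | m'.+1 =>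
      \int[@lebesgue_measure R]_(x in [set: R])
        ((exp_pdf lam x)%:E *
           iid_exp_expect lam m' (fun w => F (fun i => if i == 0%N then x else w i.-1)))%E
  end.

Definition pa_delta (lam : R) (n : nat) : R := ln n%:R / (lam * Num.sqrt n%:R).

Definition pa_Delta (p lam : R) (n : nat) : R := - ln (1 - p `^ (n%:R^-1)) / lam.

(* One run of PA-CORE(Delta) with n+1 workers i_1..i_{n+1} (worker i_{k+1} is
   the ordinal k : 'I_n.+1).
   d k     = delay of the "trigger" message i_0 -> worker k,
   r j k   = delay of the "redirect" message worker j -> worker k (j <> k),
   c k     = unknown offset of the local clock of worker k: C_k(t) = t + c k.
   The supervisor's clock is real time; trigger sent at time 0. *)
Section Run.
Variables (lam Delta : R) (n : nat) (c : 'I_n.+1 -> R)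
          (d : 'I_n.+1 -> R) (r : 'I_n.+1 -> 'I_n.+1 -> R).

Definition arrival (j k : 'I_n.+1) : R := d j + r j k.

Definition local_clock (k : 'I_n.+1) (t : R) : R := t + c k.

Definition last_arrival (k : 'I_n.+1) : R :=
  \big[Num.max/0]_(j < n.+1 | j != k) arrival j k.

Definition T_adj (k : 'I_n.+1) : R :=
  n%:R^-1 * (\sum_(j < n.+1 | j != k) local_clock k (arrival j k)) - 2 / lam.

Definition adj_clock (k : 'I_n.+1) (t : R) : R := local_clock k t - T_adj k.

(* target reading Delta + 2 delta (k-1) for worker i_k, k = val k + 1 *)
Definition target (k : 'I_n.+1) : R := Delta + 2 * pa_delta lam n * (val k)%:R.

(* the action time: the earliest t >= last_arrival k with adj_clock k t >= target k
   (adj_clock k is t |-> t + const, so this is a max) *)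
Definition action_time (k : 'I_n.+1) : R :=
  Num.max (last_arrival k) (target k - c k + T_adj k).

Definition response_time : R := \big[Num.max/0]_(k < n.+1) action_time k.

End Run.

(* Expected response time: all (n+1) + (n+1)^2 delay variables are i.i.d.
   Exp(lam); variable 0..n are trigger delays, variable n+1 + j(n+1) + k is the
   redirect delay j -> k (diagonal ones j = k are unused dummies). *)
Definition expected_RT (lam Delta : R) (n : nat) (c : 'I_n.+1 -> R) : \bar R :=
  iid_exp_expect lam (n.+1 + n.+1 * n.+1)
    (fun w => (response_time lam Delta c (fun k => w (val k))
                 (fun j k => w (n.+1 + val j * n.+1 + val k)%N))%:E).

End PACore.

(* Main.v *)
Require Import Defs.
From HB Require Import structures.
From mathcomp Require Import all_boot all_order all_algebra.
From mathcomp Require Import all_classical all_reals all_analysis.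
From mathcomp Require Import measurable_realfun.
From mathcomp Require Import ring lra zify.
Import Order.TTheory GRing.Theory Num.Theory.
Local Open Scope ring_scope.
Set Implicit Arguments. Unset Strict Implicit. Unset Printing Implicit Defensive.
Section Aux.
Variable R : realType.
Local Notation mu := (@lebesgue_measure R).

Lemma ge0_le_integralT (f g : R -> \bar R) :
  (forall x, (0 <= f x)%E) -> (forall x, (f x <= g x)%E) ->
  (\int[mu]_x f x <= \int[mu]_x g x)%E.
Proof.
move=> f0 fg.
have g0 x : (0 <= g x)%E by exact: le_trans (f0 x) (fg x).
rewrite !ge0_integralTE//; apply: ge_ereal_sup => _ [h hf <-].
apply: ereal_sup_ubound; exists h => // x; exact: le_trans (hf x) (fg x).
Qed.

Lemma exp_pdfE (lam x : R) : 0 <= lam -> exp_pdf lam x = exponential_pdf lam x.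
Proof.
move=> l0; rewrite /exp_pdf; case: ifP => x0.
  by rewrite exponential_pdfE// mulNr.
by rewrite lt0_exponential_pdf// ltNge x0.
Qed.

Lemma exp_pdf_ge0 (lam x : R) : 0 <= lam -> 0 <= exp_pdf lam x.
Proof. by move=> l0; rewrite exp_pdfE// exponential_pdf_ge0. Qed.

Lemma measurable_exp_pdf (lam : R) : 0 <= lam -> measurable_fun setT (exp_pdf lam).
Proof.
move=> l0; rewrite (_ : exp_pdf lam = exponential_pdf lam); last first.
  by apply/funext => x; rewrite exp_pdfE.
exact: measurable_exponential_pdf.
Qed.

Lemma iid_ge0 (lam : R) m F : 0 <= lam -> (forall w, (0 <= F w)%E) ->
  (0 <= iid_exp_expect lam m F)%E.
Proof.
move=> l0; elim: m F => [|m IH] F F0 /=; first exact: F0.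
apply: integral_ge0 => x _; apply: mule_ge0; first by rewrite lee_fin exp_pdf_ge0.
by apply: IH => w; exact: F0.
Qed.

End Aux.
Section Aux2.
Variable R : realType.
Local Notation mu := (@lebesgue_measure R).

Lemma int_pdf_const (lam c : R) : 0 < lam -> 0 <= c ->
  (\int[mu]_x ((exp_pdf lam x * c)%:E) = c%:E)%E.
Proof.
move=> l0 c0.
under eq_integral do rewrite EFinM.
rewrite ge0_integralZr//.
- under eq_integral do rewrite exp_pdfE ?ltW//.
  by rewrite integral_exponential_pdf// mul1e.
- by apply/measurable_EFinP; exact: measurable_exp_pdf (ltW l0).
- by move=> x _; rewrite lee_fin exp_pdf_ge0// ltW.
Qed.

Lemma iid_le (lam : R) (h : R -> R) (K : R) : 0 < lam ->
  measurable_fun setT h -> (forall x, 0 <= h x) ->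
  (\int[mu]_x ((exp_pdf lam x)%:E * (h x)%:E) = K%:E)%E ->
  forall m A (F : (nat -> R) -> \bar R), 0 <= A -> (forall w, (0 <= F w)%E) ->
  (forall w : nat -> R, (F w <= (A + \sum_(i < m) h (w i))%:E)%E) ->
  (iid_exp_expect lam m F <= (A + m%:R * K)%:E)%E.
Proof.
move=> l0 mh h0 hK.
have K0 : 0 <= K.
  rewrite -lee_fin -hK; apply: integral_ge0 => x _ /=.
  have := @mule_ge0 R (exp_pdf lam x)%:E (h x)%:E; apply; rewrite lee_fin//.
  by rewrite exp_pdf_ge0// ltW.
elim=> [|m IH] A F A0 F0 FA /=.
  by have := FA (fun _ => 0); rewrite big_ord0 mul0r.
apply: (@le_trans _ _ (\int[mu]_x ((exp_pdf lam x * (A + m%:R * K) + exp_pdf lam x * h x)%:E))%E).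
  apply: ge0_le_integralT => x.
    apply: mule_ge0; first by rewrite lee_fin exp_pdf_ge0// ltW.
    by apply: iid_ge0 => //; exact: ltW.
  rewrite -mulrDr EFinM; apply: lee_wpmul2l; first by rewrite lee_fin exp_pdf_ge0// ltW.
  have -> : A + m%:R * K + h x = (A + h x) + m%:R * K by ring.
  apply: IH; first by rewrite addr_ge0.
    by move=> w; exact: F0.
  move=> w; apply: le_trans (FA _) _.
  by rewrite big_ord_recl /= lee_fin addrA lexx.
under eq_integral do rewrite EFinD.
rewrite ge0_integralD//.
- rewrite int_pdf_const//; last by rewrite addr_ge0// mulr_ge0.
  under eq_integral do rewrite EFinM.
  by rewrite hK -EFinD lee_fin mulrSr mulrDl mul1r addrA.
- move=> x _; rewrite lee_fin; apply: mulr_ge0; first exact: exp_pdf_ge0 (ltW l0).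
  by rewrite addr_ge0// mulr_ge0.
- apply/measurable_EFinP; apply: measurable_funM; first exact: measurable_exp_pdf (ltW l0).
  exact: measurable_cst.
- move=> x _; rewrite lee_fin; apply: mulr_ge0 => //; exact: exp_pdf_ge0 (ltW l0).
- apply/measurable_EFinP; apply: measurable_funM => //; exact: measurable_exp_pdf (ltW l0).
Qed.

End Aux2.
Section Aux3.
Variable R : realType.
Local Notation mu := (@lebesgue_measure R).

Lemma int_pdf_exp (lam a : R) : 0 < lam -> 0 <= a ->
  (\int[mu]_x ((exp_pdf lam x)%:E * (a * expR (lam / 2 * x))%:E) = (2 * a)%:E)%E.
Proof.
move=> l0 a0.
have l20 : 0 < lam / 2 by rewrite divr_gt0.
transitivity (\int[mu]_x ((2 * a)%:E * (exponential_pdf (lam / 2) x)%:E))%E.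
  apply: eq_integral => x _; rewrite -!EFinM; congr (_%:E).
  rewrite exp_pdfE ?ltW//.
  have [x0|x0] := leP 0 x.
    rewrite !exponential_pdfE//.
    have -> : lam * expR (- lam * x) = lam * (expR (- (lam / 2) * x) * expR (- (lam / 2) * x)).
      by rewrite -expRD; congr (_ * expR _); field.
    have -> : expR (lam / 2 * x) = (expR (- (lam / 2) * x))^-1 by rewrite mulNr expRN invrK.
    have E0 : expR (- (lam / 2) * x) != 0 by rewrite gt_eqF// expR_gt0.
    by field.
  by rewrite !lt0_exponential_pdf// !(mul0r, mulr0).
rewrite ge0_integralZl//.
- by rewrite integral_exponential_pdf// mule1.
- by apply/measurable_EFinP; exact: measurable_exponential_pdf.
- by move=> x _; rewrite lee_fin exponential_pdf_ge0// ltW.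
- by rewrite lee_fin mulr_ge0.
Qed.

Lemma measurable_hexp (a b : R) : measurable_fun setT (fun x : R => a * expR (b * x)).
Proof.
apply: measurable_funM; first exact: measurable_cst.
apply: measurableT_comp; first exact: measurable_expR.
apply: measurable_funM; first exact: measurable_cst.
exact: measurable_id.
Qed.

End Aux3.
Section Aux4.
Variable R : realType.

Lemma pa_delta_ge0 (lam : R) n : 0 < lam -> 0 <= pa_delta lam n.
Proof.
move=> l0; rewrite /pa_delta; case: n => [|n].
  by rewrite ln0// mul0r.
apply: divr_ge0; first by apply: ln_ge0; rewrite ler1n.
by rewrite mulr_ge0 ?ltW// sqrtr_ge0.
Qed.

Lemma sum_neq_const n (k : 'I_n.+1) (C : R) :
  \sum_(j < n.+1 | j != k) C = C * n%:R.
Proof.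
have : \sum_(j < n.+1) C = C * n.+1%:R by rewrite sumr_const card_ord mulr_natr.
rewrite (bigD1 k) //=.
have -> : C * n.+1%:R = C * n%:R + C by rewrite -natr1 mulrDr mulr1.
lra.
Qed.

Lemma rt_bound (lam Delta : R) (n : nat) (c : 'I_n.+1 -> R) (w : nat -> R) (t S : R) :
  0 < lam -> (0 < n)%N -> 0 <= t -> 0 <= S ->
  (forall i, (i < n.+1 + n.+1 * n.+1)%N -> w i <= t + S) ->
  response_time lam Delta c (fun k => w (val k))
    (fun j k => w (n.+1 + val j * n.+1 + val k)%N)
  <= `|Delta| + 2 * pa_delta lam n * n%:R + 2 * (t + S).
Proof.
move=> l0 n0 t0 S0 hw.
set d := fun k : 'I_n.+1 => w (val k).
set r := fun j k : 'I_n.+1 => w (n.+1 + val j * n.+1 + val k)%N.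
set B := 2 * (t + S).
have B0 : 0 <= B by rewrite mulr_ge0// addr_ge0.
have de0 := pa_delta_ge0 n l0.
have arr j k : arrival d r j k <= B.
  have hj : (val j < n.+1)%N := ltn_ord j.
  have hk : (val k < n.+1)%N := ltn_ord k.
  rewrite /arrival /d /r /B mulr2n mulrDl mul1r; apply: lerD; apply: hw.
    by lia.
  nia.
have la k : last_arrival d r k <= B by apply: bigmax_le.
have ta k : target lam Delta k - c k + T_adj lam c d r k <= `|Delta| + 2 * pa_delta lam n * n%:R + B.
  have T1 : T_adj lam c d r k <= B + c k.
    rewrite /T_adj; apply: (@le_trans _ _ (n%:R^-1 * (\sum_(j < n.+1 | j != k) local_clock c k (arrival d r j k)))).
      by rewrite lerBlDr lerDl divr_ge0 ?ltW.
    apply: (@le_trans _ _ (n%:R^-1 * (\sum_(j < n.+1 | j != k) (B + c k)))).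
      apply: ler_wpM2l; first by rewrite invr_ge0.
      by apply: ler_sum => j _; rewrite /local_clock lerD2r.
    rewrite sum_neq_const mulrC -mulrA mulfV ?mulr1//.
    by rewrite pnatr_eq0 -lt0n.
  have T2 : target lam Delta k <= `|Delta| + 2 * pa_delta lam n * n%:R.
    rewrite /target; apply: lerD; first exact: ler_norm.
    apply: ler_wpM2l; first by rewrite mulr_ge0.
    by rewrite ler_nat -ltnS; exact: (ltn_ord k).
  lra.
apply: bigmax_le => [|k _].
  by rewrite addr_ge0// addr_ge0// mulr_ge0// mulr_ge0.
rewrite /action_time ge_max; apply/andP; split; last exact: ta.
apply: le_trans (la k) _; rewrite lerDr addr_ge0// mulr_ge0// mulr_ge0//.
Qed.

End Aux4.
Section Aux5.
Variable R : realType.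

Lemma pt_bound (lam M x : R) : 0 < lam -> 0 < M ->
  x <= 2 * ln M / lam + 2 / (lam * M) * expR (lam / 2 * x).
Proof.
move=> l0 M0.
have H := expR_ge1Dx (lam / 2 * x - ln M).
rewrite expRD expRN lnK ?posrE// in H.
have l20 : 0 < lam / 2 by rewrite divr_gt0.
rewrite -(ler_pM2l l20).
have -> : lam / 2 * (2 * ln M / lam + 2 / (lam * M) * expR (lam / 2 * x))
  = ln M + expR (lam / 2 * x) / M.
  by field; rewrite gt_eqF// gt_eqF.
lra.
Qed.

End Aux5.
Section Aux6.
Variable R : realType.
Local Notation mu := (@lebesgue_measure R).

Lemma single_le_sum (m : nat) (f : nat -> R) i : (i < m)%N -> (forall j, 0 <= f j) ->
  f i <= \sum_(j < m) f j.
Proof.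
move=> im f0.
rewrite (bigD1 (Ordinal im)) //= lerDl sumr_ge0//.
Qed.

Lemma ERT_bound (lam Delta : R) n (c : 'I_n.+1 -> R) : 0 < lam -> (0 < n)%N ->
  (expected_RT lam Delta c <=
   (`|Delta| + 2 * pa_delta lam n * n%:R
     + 4 * ln (n.+1 + n.+1 * n.+1)%N%:R / lam + 8 / lam)%:E)%E.
Proof.
move=> l0 n0.
set Mn := (n.+1 + n.+1 * n.+1)%N.
set M : R := Mn%:R.
have M1 : 1 <= M by rewrite /M ler1n /Mn.
have M0 : 0 < M by apply: lt_le_trans M1.
set t := 2 * ln M / lam.
have t0 : 0 <= t by apply: divr_ge0 (ltW l0); apply: mulr_ge0 => //; exact: ln_ge0.
set a := 4 / (lam * M).
have a0 : 0 <= a by apply: divr_ge0 => //; apply: mulr_ge0; exact: ltW.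
have := @iid_le R lam (fun x => a * expR (lam / 2 * x)) (2 * a) l0
  (measurable_hexp _ _) _ (int_pdf_exp l0 a0) Mn
  (`|Delta| + 2 * pa_delta lam n * n%:R + 2 * t).
move=> /(_ _ _ _ _ _) H.
apply: le_trans; first apply: H.
- by move=> x; rewrite mulr_ge0// expR_ge0.
- have hd := pa_delta_ge0 n l0.
  apply: addr_ge0; last exact: mulr_ge0.
  apply: addr_ge0 => //; apply: mulr_ge0 => //; exact: mulr_ge0.
- move=> w; rewrite lee_fin /response_time; apply: bigmax_ge_id.
- move=> w; rewrite lee_fin.
  set S := \sum_(i < Mn) (a / 2 * expR (lam / 2 * w i)).
  have S0 : 0 <= S by rewrite sumr_ge0// => i _; rewrite mulr_ge0 ?expR_ge0// divr_ge0.
  have -> : \sum_(i < Mn) (a * expR (lam / 2 * w i)) = 2 * S.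
    by rewrite /S mulr_sumr; apply: eq_bigr => i _; field.
  apply: le_trans (rt_bound Delta c l0 n0 t0 S0 _) _; last by lra.
  move=> i iM.
  apply: le_trans (pt_bound (w i) l0 M0) _.
  rewrite -/t lerD2l.
  have -> : 2 / (lam * M) * expR (lam / 2 * w i) = a / 2 * expR (lam / 2 * w i).
    by rewrite /a; field; rewrite gt_eqF// gt_eqF.
  rewrite /S; have HH := (@single_le_sum Mn (fun j => a / 2 * expR (lam / 2 * w j)) i iM).
  apply: HH => j; by rewrite mulr_ge0 ?expR_ge0// divr_ge0.
rewrite lee_fin -/M /t /a.
have -> : Mn%:R * (2 * (4 / (lam * M))) = 8 / lam.
  by rewrite -/M; field; rewrite gt_eqF// gt_eqF.
have -> : 2 * (2 * ln M / lam) = 4 * ln M / lam by field; rewrite gt_eqF.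
by [].
Qed.

End Aux6.
Section Aux7.
Variable R : realType.

Lemma Delta_bound (p lam : R) n : 0 < p -> p < 1 -> 0 < lam -> (0 < n)%N ->
  `|pa_Delta p lam n| <= (ln n%:R + ln (1 + (- ln p)^-1)) / lam.
Proof.
move=> p0 p1 l0 n0.
set q := - ln p.
have q0 : 0 < q by rewrite /q oppr_gt0 ln_lt0// p0 p1.
have nR0 : 0 < n%:R :> R by rewrite ltr0n.
set a := q / n%:R.
have a0 : 0 < a by rewrite divr_gt0.
have pw : p `^ n%:R^-1 = expR (- a).
  rewrite -[LHS]lnK ?posrE ?powR_gt0// ln_powR /a /q; congr expR; ring.
set E := expR (- a).
have E0 : 0 < E by rewrite expR_gt0.
have hE : E * (1 + a) <= 1.
  have : E * (1 + a) <= E * expR a by rewrite ler_pM2l// expR_ge1Dx.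
  by rewrite /E -expRD addNr expR0.
set y := 1 - p `^ n%:R^-1.
have yE : y = 1 - E by rewrite /y pw.
have y0 : 0 < y by rewrite yE; nra.
have y1 : y <= 1 by rewrite yE; lra.
have hy : y^-1 <= 1 + a^-1.
  rewrite -(ler_pM2r y0) mulVf ?gt_eqF// mulrDl mul1r.
  have : E <= y / a.
    by rewrite ler_pdivlMr// yE; nra.
  rewrite yE; move=> h; rewrite mulrC; lra.
have ha : 1 + a^-1 <= n%:R * (1 + q^-1).
  rewrite /a invf_div.
  have n1 : 1 <= n%:R :> R by rewrite ler1n.
  lra.
rewrite /pa_Delta -/y ger0_norm; last first.
  by apply: divr_ge0; [rewrite oppr_ge0 ln_le0|exact: ltW].
rewrite ler_pM2r ?invr_gt0// -lnV ?posrE//.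
rewrite -lnM ?posrE// ?addr_gt0 ?invr_gt0//.
rewrite ler_ln ?posrE ?invr_gt0// ?mulr_gt0 ?addr_gt0 ?invr_gt0//.
exact: le_trans hy ha.
Qed.

End Aux7.
Theorem theorem7 (R : realType) (p lam : R) :
  0 < p < 1 -> 0 < lam ->
  exists C : R, exists N : nat, forall n : nat, (N <= n)%N ->
    forall c : 'I_n.+1 -> R,
      (expected_RT lam (pa_Delta p lam n) c
         <= (C * (Num.sqrt n%:R * ln n%:R) / lam)%:E)%E.
Proof.
move=> /andP[p0 p1] l0.
set L0 := ln (1 + (- ln p)^-1).
have q0 : 0 < - ln p by rewrite oppr_gt0 ln_lt0// p0 p1.
have L00 : 0 <= L0 by rewrite /L0 ln_ge0// lerDl invr_ge0 ltW.
set l2 := ln (2 : R).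
have l20 : 0 < l2 by rewrite /l2 ln_gt0// ltr1n.
set K0 := L0 + 4 * ln (6 : R) + 8.
have K00 : 0 <= K0.
  by rewrite /K0 addr_ge0// addr_ge0// mulr_ge0// ln_ge0// ler1n.
exists (11 + K0 / l2), 2%N => n n2 c.
have n0 : (0 < n)%N by apply: leq_trans n2.
apply: le_trans (ERT_bound _ c l0 n0) _.
rewrite lee_fin.
have nR0 : 0 < n%:R :> R by rewrite ltr0n.
set Q := Num.sqrt n%:R.
set X := ln n%:R.
have hQ2 : n%:R = Q * Q by rewrite /Q -expr2 sqr_sqrtr// ltW.
have Q1 : 1 <= Q.
  by have := @ler_sqrt R 1 n%:R (ltW nR0); rewrite sqrtr1 -/Q => ->; rewrite ler1n.
have hX : l2 <= X by rewrite /X /l2 ler_ln ?posrE// ?ler_nat.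
set P := Q * X.
have hP1 : X <= P by rewrite /P ler_peMl// (le_trans (ltW l20)).
have hP2 : K0 <= K0 / l2 * P.
  rewrite -mulrA ler_peMr// ler_pdivlMl// mulr1 (le_trans hX)// /P ler_peMl//.
have hd : 2 * pa_delta lam n * n%:R = 2 * P / lam.
  rewrite /pa_delta -/Q -/X /P.
  have Q0 : Q != 0 by rewrite gt_eqF// (lt_le_trans _ Q1).
  rewrite hQ2; field; rewrite Q0 gt_eqF//.
have hM : ln (n.+1 + n.+1 * n.+1)%N%:R <= ln (6 : R) + 2 * X.
  have hle : (n.+1 + n.+1 * n.+1)%N%:R <= (6 : R) * n%:R * n%:R.
    rewrite -!natrM ler_nat; nia.
  rewrite /X mulr2n mulrDl mul1r addrA -!lnM ?posrE ?mulr_gt0//.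
  by rewrite ler_ln ?posrE ?mulr_gt0// ltr0n.
have hD := Delta_bound p0 p1 l0 n0.
rewrite -/X -/L0 in hD.
rewrite hd.
set il := lam^-1.
have il0 : 0 < il by rewrite invr_gt0.
have h1 : X * il <= P * il by rewrite ler_pM2r.
have h2 : (L0 + 4 * ln (6 : R) + 8) * il <= K0 / l2 * P * il by rewrite ler_pM2r.
have h3 : ln (n.+1 + n.+1 * n.+1)%N%:R * il <= (ln (6 : R) + 2 * X) * il by rewrite ler_pM2r.
have hD' : `|pa_Delta p lam n| <= (X + L0) * il by exact: hD.
move: h2; set Cc := K0 / l2 => h2.
rewrite /Cc -/Cc.
lra.
Qed.
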